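(* Let $G$ be a finitely generated group satisfying Kůrka's dichotomy, and let $H$ be a finitely generated subgroup of $G$. Then $H$ satisfies Kůrka's dichotomy.
   Context: For a finitely generated group $\Gamma$ with finite generating set $E$ closed under inverses, let $d_E$ be the word metric and define the Cantor metric on $A^\Gamma$ ($A$ a finite alphabet) by $d^E(x,y)=2^{-k}$ with $k=\min\{d_E(1,g): x(g)\neq y(g)\}$; $B^E(x,r)$ is its closed ball. A cellular automaton (CA) on $\Gamma$ with alphabet $A$ is a map $\Phi:A^\Gamma\to A^\Gamma$ given by a finite $S\subseteq\Gamma$ and $\mu:A^S\to A$ via $\Phi(x)(g)=\mu(s\mapsto x(gs))$. $x$ is an equicontinuity point of $\Phi$ if $\forall\epsilon>0\,\exists\delta>0\,\forall t\in\mathbb{N}$, $\Phi^t(B^E(x,\delta))\subseteq B^E(\Phi^t(x),\epsilon)$. $\Phi$ is sensitive to initial conditions if $\exists\epsilon>0\,\forall x\,\forall\delta>0\,\exists t\in\mathbb{N}\,\exists y\in B^E(x,\delta)$ with $\Phi^t(y)\notin B^E(\Phi^t(x),\epsilon)$. These notions do not depend on $E$. The group $\Gamma$ satisfies Kůrka's dichotomy if for every finite alphabet $A$, every CA on $\Gamma$ that is not sensitive to initial conditions has an equicontinuity point (equivalently: a CA on $\Gamma$ is sensitive iff it has no equicontinuity point). *)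

(* Defs.v *)
From Stdlib Require Import Reals List.
Import ListNotations.
Open Scope R_scope.

Record Group := {
  carrier :> Type;
  gmul : carrier -> carrier -> carrier;
  gone : carrier;
  ginv : carrier -> carrier;
  gmulA : forall a b c, gmul a (gmul b c) = gmul (gmul a b) c;
  gmul1l : forall a, gmul gone a = a;
  gmul1r : forall a, gmul a gone = a;
  gmulVl : forall a, gmul (ginv a) a = gone;
  gmulVr : forall a, gmul a (ginv a) = gone
}.

Arguments gmul {_}. Arguments gone {_}. Arguments ginv {_}.

Definition group_hom (H G : Group) (f : H -> G) : Prop :=
  forall a b, f (gmul a b) = gmul (f a) (f b).
Arguments group_hom {H G}.

Definition word_prod (G : Group) (w : list G) : G :=
  fold_right gmul gone w.
Arguments word_prod {G}.

Definition word_over (G : Group) (E : list G) (w : list G) : Prop :=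
  forall e, In e w -> In e E.
Arguments word_over {G}.

Definition gen_set (G : Group) (E : list G) : Prop :=
  (forall e, In e E -> In (ginv e) E) /\
  (forall g : G, exists w, word_over E w /\ word_prod w = g).
Arguments gen_set {G}.

Definition fin_gen (G : Group) : Prop := exists E : list G, gen_set E.

Definition word_len (G : Group) (E : list G) (g : G) (n : nat) : Prop :=
  (exists w, word_over E w /\ word_prod w = g /\ length w = n) /\
  (forall w, word_over E w -> word_prod w = g -> (n <= length w)%nat).
Arguments word_len {G}.

(* y lies in the closed ball B^E(x, r): d^E(x,y) <= r, where
   d^E(x,y) = 2^{-k}, k = min{ d_E(1,g) : x(g) <> y(g) } (and 0 if x = y).
   Since 2^{-k} is the max of 2^{-d_E(1,g)} over g with x(g) <> y(g),
   this is exactly the following. *)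
Definition in_ball (G : Group) (E : list G) (A : Type)
    (x : G -> A) (r : R) (y : G -> A) : Prop :=
  forall (g : G) (n : nat), x g <> y g -> word_len E g n -> (/ 2) ^ n <= r.
Arguments in_ball {G} E {A}.

Definition finite_type (A : Type) : Prop := exists l : list A, forall a : A, In a l.

Definition is_CA (G : Group) (A : Type) (Phi : (G -> A) -> (G -> A)) : Prop :=
  exists (S : list G) (mu : (G -> A) -> A),
    (forall p q : G -> A, (forall s, In s S -> p s = q s) -> mu p = mu q) /\
    (forall (x : G -> A) (g : G), Phi x g = mu (fun s => x (gmul g s))).
Arguments is_CA {G A}.

Definition equicontinuity_point (G : Group) (E : list G) (A : Type)
    (Phi : (G -> A) -> (G -> A)) (x : G -> A) : Prop :=
  forall eps, 0 < eps -> exists delta, 0 < delta /\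
    forall (t : nat) (y : G -> A), in_ball E x delta y ->
      in_ball E (Nat.iter t Phi x) eps (Nat.iter t Phi y).
Arguments equicontinuity_point {G} E {A}.

Definition sensitive (G : Group) (E : list G) (A : Type)
    (Phi : (G -> A) -> (G -> A)) : Prop :=
  exists eps, 0 < eps /\
    forall (x : G -> A) (delta : R), 0 < delta ->
      exists (t : nat) (y : G -> A), in_ball E x delta y /\
        ~ in_ball E (Nat.iter t Phi x) eps (Nat.iter t Phi y).
Arguments sensitive {G} E {A}.

(* Kurka's dichotomy (stated for every admissible generating set E;
   the notions are independent of E). *)
Definition kurka_dichotomy (G : Group) : Prop :=
  forall E : list G, gen_set E ->
  forall (A : Type), finite_type A ->
  forall Phi : (G -> A) -> (G -> A), is_CA Phi ->
    ~ sensitive E Phi -> exists x : G -> A, equicontinuity_point E Phi x.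

(* Main.v *)
Require Import Defs.
From Stdlib Require Import Reals List Lia Lra Classical ClassicalEpsilon FunctionalExtensionality PropExtensionality.
Import ListNotations.
Open Scope R_scope.

Lemma mul_cancel_l (G:Group) (a b c : G) : gmul a b = gmul a c -> b = c.
Proof.
  intro E. assert (H: gmul (ginv a) (gmul a b) = gmul (ginv a) (gmul a c)) by (rewrite E; auto).
  rewrite !gmulA, gmulVl, !gmul1l in H. exact H.
Qed.

Lemma hom_one (G H : Group) (f : H -> G) : group_hom f -> f gone = gone.
Proof.
  intro hf. apply (mul_cancel_l _ (f gone)). rewrite <- hf, gmul1r, gmul1r. auto.
Qed.

Lemma hom_inv (G H : Group) (f : H -> G) : group_hom f -> forall a, f (ginv a) = ginv (f a).
Proof.
  intros hf a. apply (mul_cancel_l _ (f a)). rewrite <- hf, gmulVr, gmulVr. apply hom_one; auto.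
Qed.

Lemma min_nat (P: nat->Prop) n : P n -> exists m, P m /\ forall k, P k -> (m <= k)%nat.
Proof.
  induction n as [n IH] using (well_founded_induction Wf_nat.lt_wf). intros Pn.
  destruct (classic (exists k, P k /\ (k < n)%nat)) as [[k [Pk Hk]]|Hn].
  - apply (IH k Hk Pk).
  - exists n; split; auto; intros k Pk; destruct (Nat.le_gt_cases n k); auto; exfalso; apply Hn; eauto.
Qed.

Lemma wl_exists (G : Group) (E : list G) : gen_set E -> forall g, exists n, word_len E g n.
Proof.
  intros [_ Hg] g. destruct (Hg g) as [w [Hw Hp]].
  destruct (min_nat (fun n => exists w, word_over E w /\ word_prod w = g /\ length w = n) (length w))
    as [m [Pm Hm]]; eauto.
  exists m; split; auto. intros w' H1 H2. apply Hm; eauto.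
Qed.

Lemma wl_unique (G : Group) (E : list G) g n m : word_len E g n -> word_len E g m -> n = m.
Proof.
  intros [[w [A1 [A2 A3]]] B] [[w' [C1 [C2 C3]]] D].
  specialize (B w' C1 C2). specialize (D w A1 A2). lia.
Qed.

Fixpoint words {T} (E : list T) (k : nat) : list (list T) :=
  match k with 0 => [[]] | S k => [] :: flat_map (fun e => map (cons e) (words E k)) E end.

Lemma words_in {T} (E : list T) k : forall w, (forall e, In e w -> In e E) -> (length w <= k)%nat -> In w (words E k).
Proof.
  induction k; intros w Hw Hl.
  - destruct w; simpl in *; [auto | lia].
  - destruct w as [|e w]; simpl; auto. right. apply in_flat_map. exists e. split.
    + apply Hw; simpl; auto.
    + apply in_map. apply IHk; [intros; apply Hw; simpl; auto | simpl in Hl; lia].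
Qed.

Lemma ball_list (G : Group) (E : list G) k : exists L, forall g n, word_len E g n -> (n <= k)%nat -> In g L.
Proof.
  exists (map word_prod (words E k)). intros g n [[w [A1 [A2 A3]]] _] Hn.
  rewrite <- A2. apply in_map. apply words_in; auto. lia.
Qed.

Lemma list_bound {T} (L : list T) (P : T -> nat -> Prop) :
  (forall t, In t L -> exists n, P t n) -> exists m, forall t, In t L -> exists n, P t n /\ (n <= m)%nat.
Proof.
  induction L as [|a L IH]; intros Hp.
  - exists O. intros t [].
  - destruct (Hp a (or_introl eq_refl)) as [na Ha].
    destruct IH as [m Hm]; [intros; apply Hp; simpl; auto|].
    exists (Nat.max na m). intros t [<-|Ht].
    + exists na; split; auto; lia.
    + destruct (Hm t Ht) as [n [H1 H2]]. exists n; split; auto; lia.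
Qed.

Lemma wl_bound (G : Group) (E : list G) (L : list G) : gen_set E ->
  exists m, forall g n, In g L -> word_len E g n -> (n <= m)%nat.
Proof.
  intros gE. destruct (list_bound L (word_len E)) as [m Hm].
  { intros; apply wl_exists; auto. }
  exists m. intros g n Hg Hl. destruct (Hm g Hg) as [n' [H1 H2]].
  rewrite (wl_unique _ _ _ _ _ Hl H1); auto.
Qed.

Definition agree (G : Group) (E : list G) {A} (x y : G -> A) k :=
  forall g n, word_len E g n -> (n <= k)%nat -> x g = y g.

Lemma pow_half_le a b : (a <= b)%nat -> (/2)^b <= (/2)^a.
Proof.
  intro H; induction H. lra. simpl. assert (0 <= (/2)^m) by (apply pow_le; lra). lra.
Qed.

Lemma agree_ball (G : Group) (E : list G) {A} (x y : G -> A) k :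
  agree G E x y k -> in_ball E x ((/2)^(S k)) y.
Proof.
  intros Ha g n Hne Hl. destruct (Compare_dec.le_gt_dec n k).
  - exfalso; apply Hne; eapply Ha; eauto.
  - apply pow_half_le; lia.
Qed.

Lemma ball_agree (G : Group) (E : list G) {A} (x y : G -> A) r k :
  in_ball E x r y -> r < (/2)^k -> agree G E x y k.
Proof.
  intros Hb Hr g n Hl Hn. destruct (classic (x g = y g)); auto. exfalso.
  specialize (Hb g n H Hl). pose proof (pow_half_le _ _ Hn). lra.
Qed.

Lemma ball_mono (G : Group) (E : list G) {A} (x y : G -> A) r r' :
  in_ball E x r y -> r <= r' -> in_ball E x r' y.
Proof. intros Hb Hr g n H1 H2. specialize (Hb g n H1 H2). lra. Qed.

Lemma small eps : 0 < eps -> exists k, (/2)^k < eps.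
Proof.
  intros He. destruct (pow_lt_1_zero (/2)) with (y := eps) as [N HN]; auto.
  { rewrite Rabs_right; lra. }
  exists N. specialize (HN N (le_n _)). rewrite Rabs_right in HN; auto.
  apply Rle_ge, pow_le; lra.
Qed.

Lemma half_lt k : (/2)^(S k) < (/2)^k.
Proof. simpl. assert (0 < (/2)^k) by (apply pow_lt; lra). lra. Qed.

Lemma half_pos k : 0 < (/2)^k.
Proof. apply pow_lt; lra. Qed.

Lemma not_sens (G : Group) (E : list G) {A} (Phi : (G->A)->(G->A)) : ~ sensitive E Phi ->
  forall eps, 0 < eps -> exists x delta, 0 < delta /\ forall t y, in_ball E x delta y ->
     in_ball E (Nat.iter t Phi x) eps (Nat.iter t Phi y).
Proof.
  intros Hns eps He. apply NNPP; intro Hn. apply Hns. exists eps; split; auto.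
  intros x delta Hd. apply NNPP; intro Hn2. apply Hn. exists x, delta; split; auto.
  intros t y Hy. apply NNPP; intro Hn3. apply Hn2. exists t, y; auto.
Qed.

Definition indCA {G H : Group} {A} (f : H -> G) (mu : (H->A)->A) : (G->A)->(G->A) :=
  fun Z g => mu (fun s => Z (gmul g (f s))).

Lemma indCA_eq {G H : Group} {A} (f : H -> G) (mu : (H->A)->A) Z g :
  indCA f mu Z g = mu (fun s => Z (gmul g (f s))).
Proof. reflexivity. Qed.

Lemma orbit (G H : Group) (f : H -> G) (A:Type) (mu : (H->A)->A) (Phi : (H->A)->(H->A)) :
  group_hom f -> (forall z h, Phi z h = mu (fun s => z (gmul h s))) ->
  forall t X r x, (forall h, x h = X (gmul r (f h))) -> forall h,
  Nat.iter t (indCA f mu) X (gmul r (f h)) = Nat.iter t Phi x h.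
Proof.
  intros hf HPhi t X r x Hx. induction t; intros h; simpl Nat.iter.
  - auto.
  - rewrite indCA_eq, HPhi. f_equal. apply functional_extensionality; intro s.
    rewrite <- gmulA, <- hf. apply IHt.
Qed.

Definition Cc (G H : Group) (f : H -> G) (g g' : G) := exists h, g = gmul g' (f h).
Definition rep (G H : Group) (f : H -> G) (g : G) : G := epsilon (inhabits gone) (Cc G H f g).
Definition coord (G H : Group) (f : H -> G) (g : G) : H :=
  epsilon (inhabits gone) (fun h => g = gmul (rep G H f g) (f h)).
Definition finv (G H : Group) (f : H -> G) (g : G) : H :=
  epsilon (inhabits gone) (fun h => f h = g).

Section Cos.
Variables (G H : Group) (f : H -> G) (hf : group_hom f) (finj : forall a b : H, f a = f b -> a = b).

Lemma finv_f h : finv G H f (f h) = h.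
Proof. apply finj. unfold finv. apply (epsilon_spec (inhabits gone) (fun h' => f h' = f h)). eauto. Qed.

Lemma rep_spec g : Cc G H f g (rep G H f g).
Proof. unfold rep. apply epsilon_spec. exists g, gone. rewrite (hom_one _ _ _ hf), gmul1r; auto. Qed.

Lemma Cc_eq g g' : Cc G H f g g' -> Cc G H f g = Cc G H f g'.
Proof.
  intros [h0 H0]. subst g. apply functional_extensionality; intro z.
  apply propositional_extensionality; split; intros [h Hz].
  - exists (gmul h (ginv h0)). rewrite hf, gmulA, <- Hz, <- gmulA, <- hf, gmulVr, (hom_one _ _ _ hf), gmul1r. auto.
  - exists (gmul h h0). rewrite Hz, hf, gmulA. auto.
Qed.

Lemma rep_mul r h : rep G H f (gmul r (f h)) = rep G H f r.
Proof. unfold rep. rewrite (Cc_eq (gmul r (f h)) r); eauto. exists h; auto. Qed.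

Lemma rep_rep g : rep G H f (rep G H f g) = rep G H f g.
Proof. destruct (rep_spec g) as [h Hh]. rewrite Hh at 2. rewrite rep_mul. auto. Qed.

Lemma coord_spec g : g = gmul (rep G H f g) (f (coord G H f g)).
Proof. unfold coord. apply (epsilon_spec (inhabits gone) (fun h => g = gmul (rep G H f g) (f h))). apply rep_spec. Qed.

Lemma coord_mul g h : coord G H f (gmul (rep G H f g) (f h)) = h.
Proof.
  apply finj. pose proof (coord_spec (gmul (rep G H f g) (f h))) as E.
  rewrite rep_mul, rep_rep in E. symmetry. eapply mul_cancel_l. exact E.
Qed.
End Cos.

Lemma word_map (G H : Group) (f : H -> G) : group_hom f -> forall w, word_prod (map f w) = f (word_prod w).
Proof.
  intros hf w; induction w; simpl. symmetry; apply hom_one; auto. rewrite IHw, hf; auto.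
Qed.

Lemma len_comp (G H : Group) (f : H -> G) (EH : list H) (EG : list G) : group_hom f ->
  gen_set EG -> (forall e, In e EH -> In (f e) EG) ->
  forall h n, word_len EH h n -> exists m, word_len EG (f h) m /\ (m <= n)%nat.
Proof.
  intros hf gEG Hsub h n [[w [A1 [A2 A3]]] _].
  destruct (wl_exists _ _ gEG (f h)) as [m Hm]. exists m; split; auto.
  destruct Hm as [_ Hm]. rewrite <- A3, <- (length_map f w). apply Hm.
  - intros e He. apply in_map_iff in He. destruct He as [a [<- Ha]]. auto.
  - rewrite word_map; subst; auto.
Qed.

Lemma distort (G H : Group) (f : H -> G) (EH : list H) (EG : list G) :
  (forall a b : H, f a = f b -> a = b) -> gen_set EH ->
  forall K, exists m, forall h n, word_len EG (f h) n -> (n <= K)%nat -> forall n', word_len EH h n' -> (n' <= m)%nat.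
Proof.
  intros finj gEH K. destruct (ball_list G EG K) as [L HL].
  destruct (wl_bound H EH (map (finv G H f) L) gEH) as [m Hm].
  exists m. intros h n Hl Hn n' Hl'. apply (Hm h); auto.
  rewrite <- (finv_f G H f finj h). apply in_map. eauto.
Qed.

Theorem corollary1 (G H : Group) (f : H -> G) :
  group_hom f -> (forall a b : H, f a = f b -> a = b) ->
  fin_gen G -> kurka_dichotomy G ->
  fin_gen H -> kurka_dichotomy H.
Proof.
  intros hf finj [E0 gE0] KG _ EH gEH A finA Phi CAPhi nsPhi.
  destruct CAPhi as [SS [mu [Hloc HPhi]]].
  set (EG := E0 ++ map f EH).
  assert (Hsub : forall e, In e EH -> In (f e) EG).
  { intros e He. unfold EG. apply in_or_app. right. apply in_map; auto. }
  assert (gEG : gen_set EG).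
  { split.
    - intros e He. unfold EG in *. apply in_app_or in He. destruct He as [He|He]; apply in_or_app.
      + left. apply (proj1 gE0); auto.
      + right. apply in_map_iff in He. destruct He as [a [<- Ha]].
        rewrite <- (hom_inv _ _ _ hf). apply in_map. apply (proj1 gEH); auto.
    - intros g. destruct (proj2 gE0 g) as [w [Hw Hp]]. exists w; split; auto.
      intros e He. unfold EG. apply in_or_app. left; auto. }
  assert (CAPsi : is_CA (indCA f mu)).
  { exists (map f SS), (fun p => mu (fun s => p (f s))). split.
    - intros p q Hpq. apply Hloc. intros s Hs. apply Hpq. apply in_map; auto.
    - intros; reflexivity. }
  assert (nsPsi : ~ sensitive EG (indCA f mu)).
  { intros [eps [He Hs]].
    destruct (small eps He) as [k Hk].
    destruct (ball_list G EG k) as [Lk HLk].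
    destruct (list_bound Lk (fun g n => word_len EH (coord G H f g) n)) as [m Hm].
    { intros; apply wl_exists; auto. }
    destruct (not_sens _ EH Phi nsPhi ((/2)^(S m)) (half_pos _)) as [x0 [d0 [Hd0 Hst]]].
    destruct (small d0 Hd0) as [m' Hm'].
    destruct (ball_list H EH m') as [LH HLH].
    set (L' := flat_map (fun g => map (fun h => gmul (rep G H f g) (f h)) LH) Lk).
    destruct (wl_bound G EG L' gEG) as [K HK].
    set (X := fun g => x0 (coord G H f g)).
    destruct (Hs X ((/2)^(S K)) (half_pos _)) as [t [Y [HY HnY]]].
    apply HnY. apply ball_mono with ((/2)^(S k)); [|pose proof (half_lt k); lra].
    apply agree_ball. intros g n Hl Hn.
    assert (Hg: In g Lk) by eauto.
    set (r := rep G H f g).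
    assert (Hxr: forall h, x0 h = X (gmul r (f h))).
    { intro h. unfold X, r. rewrite coord_mul; auto. }
    set (yr := fun h => Y (gmul r (f h))).
    assert (Hagr: agree H EH x0 yr m').
    { intros h n' Hl' Hn'. rewrite Hxr. unfold yr.
      destruct (wl_exists _ _ gEG (gmul r (f h))) as [n'' Hn''].
      apply (ball_agree G EG X Y _ K HY (half_lt K) (gmul r (f h)) n''); auto.
      apply (HK (gmul r (f h)) n''); auto. unfold L'. apply in_flat_map. exists g; split; auto.
      apply in_map with (f := fun h => gmul (rep G H f g) (f h)). eauto. }
    assert (Hb1 : (/2)^(S m') <= d0) by (pose proof (half_lt m'); lra).
    pose proof (Hst t yr (ball_mono _ _ _ _ _ _ (agree_ball _ _ _ _ _ Hagr) Hb1)) as Hs2.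
    pose proof (ball_agree _ _ _ _ _ m Hs2 (half_lt m)) as Ha2.
    assert (Eg: g = gmul r (f (coord G H f g))) by (apply coord_spec; auto).
    rewrite Eg.
    rewrite (orbit G H f A mu Phi hf HPhi t X r x0 Hxr).
    rewrite (orbit G H f A mu Phi hf HPhi t Y r yr (fun h => eq_refl)).
    destruct (Hm g Hg) as [n' [Hn1 Hn2]]. eapply Ha2; eauto. }
  destruct (KG EG gEG A finA (indCA f mu) CAPsi nsPsi) as [X HX].
  exists (fun h => X (f h)).
  intros eps He. destruct (small eps He) as [k Hk].
  destruct (HX ((/2)^(S k)) (half_pos _)) as [d' [Hd' Hst]].
  destruct (small d' Hd') as [K HK].
  destruct (distort G H f EH EG finj gEH K) as [m Hm].
  exists ((/2)^(S m)); split; [apply half_pos|].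
  intros t y Hy.
  set (Y := fun g => match excluded_middle_informative (exists h, f h = g) with
                     | left _ => y (finv G H f g) | right _ => X g end).
  assert (Hy' := ball_agree _ _ _ _ _ m Hy (half_lt m)).
  assert (HXY : agree G EG X Y K).
  { intros g n Hl Hn. unfold Y. destruct (excluded_middle_informative _) as [[h <-]|Hne]; auto.
    rewrite finv_f; auto. destruct (wl_exists _ _ gEH h) as [n' Hn'].
    apply (Hy' h n'); auto. eapply Hm; eauto. }
  assert (Hb1 : (/2)^(S K) <= d') by (pose proof (half_lt K); lra).
  pose proof (Hst t Y (ball_mono _ _ _ _ _ _ (agree_ball _ _ _ _ _ HXY) Hb1)) as Hs2.
  pose proof (ball_agree _ _ _ _ _ k Hs2 (half_lt k)) as Ha2.
  apply ball_mono with ((/2)^(S k)); [|pose proof (half_lt k); lra].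
  apply agree_ball. intros h n Hl Hn.
  rewrite <- (orbit G H f A mu Phi hf HPhi t X gone (fun h => X (f h))) by (intro; rewrite gmul1l; auto).
  rewrite <- (orbit G H f A mu Phi hf HPhi t Y gone y).
  2:{ intro h'. rewrite gmul1l. unfold Y. destruct (excluded_middle_informative _) as [_|Hne].
      - rewrite finv_f; auto.
      - exfalso; eauto. }
  rewrite gmul1l. destruct (len_comp G H f EH EG hf gEG Hsub h n Hl) as [m' [Hm1 Hm2]].
  eapply Ha2; eauto. lia.
Qed.
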